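(* Let $\rho_{AB},\tau_{AB}\in\mathcal{S}_{\leq}(\mathcal{H}_A\otimes\mathcal{H}_B)$, $d_A=\dim\mathcal{H}_A$, $d_{\min}=\min\{d_A,\dim\mathcal{H}_B\}$, and $\delta:=\bar D(\rho_{AB},\tau_{AB})$. Then $$\big|H_{\min}(A|B)_\rho-H_{\min}(A|B)_\tau\big|\leq\frac{d_A\,d_{\min}\,\delta}{\ln 2\cdot\min\{\mathrm{tr}\,\rho_{AB},\mathrm{tr}\,\tau_{AB}\}}.$$
   Context: Hilbert spaces finite-dimensional; $\mathcal{S}_=(\mathcal{H})$: normalized states; $\mathcal{S}_{\leq}(\mathcal{H})=\{\rho\geq0:0<\mathrm{tr}\,\rho\leq1\}$. Logs base 2. $H_{\min}(A|B)_\rho=\max_{\sigma_B\in\mathcal{S}_=(\mathcal{H}_B)}\sup\{\lambda : 2^{-\lambda}\mathbb{1}_A\otimes\sigma_B\geq\rho_{AB}\}$. Generalized trace distance $\bar D(\rho,\tau)=\max\{\mathrm{tr}\{\rho-\tau\}_+,\mathrm{tr}\{\tau-\rho\}_+\}$, with $\{X\}_+$ the positive part of $X$. *)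

(* Defs.v *)
From mathcomp Require Import all_boot all_order all_algebra.
From mathcomp Require Import sesquilinear spectral.
From mathcomp Require Import boolp classical_sets reals ereal exp.
From mathcomp.real_closed Require Import complex mxtens.

Set Implicit Arguments.
Unset Strict Implicit.
Unset Printing Implicit Defensive.

Import Order.TTheory GRing.Theory Num.Theory.
Local Open Scope ring_scope.
Local Open Scope classical_set_scope.

Section QuantumDefs.
Variable R : realType.
Local Notation C := R[i].

Definition adjmx m n (A : 'M[C]_(m, n)) : 'M[C]_(n, m) := (map_mx Num.conj A)^T.

(* positive semidefinite operator: Hermitian with nonnegative quadratic form
   (in the partial order of C, 0 <= z means z is real and nonnegative) *)
Definition psdmx n (A : 'M[C]_n) : Prop :=
  A \is hermsymmx /\ forall v : 'rV[C]_n, 0 <= (v *m A *m adjmx v) 0 0.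

Definition loewner_le n (A B : 'M[C]_n) : Prop := psdmx (B - A).

(* real-valued trace (the trace of a Hermitian matrix is real) *)
Definition trR n (A : 'M[C]_n) : R := complex.Re (\tr A).

Definition subnormalized n (rho : 'M[C]_n) : Prop :=
  psdmx rho /\ 0 < trR rho /\ trR rho <= 1.

Definition normalized n (sigma : 'M[C]_n) : Prop :=
  psdmx sigma /\ \tr sigma = 1.

(* positive part {X}_+ of a Hermitian (hence normal) matrix X, via its
   spectral decomposition X = U^-1 diag(d) U (U unitary):
   {X}_+ = U^-1 diag(max(d_i,0)) U *)
Definition posPart n (X : 'M[C]_n) : 'M[C]_n :=
  let U := spectralmx X in
  invmx U *m diag_mx (map_mx (fun z : C => (Num.max (complex.Re z) 0)%:C%C)
                             (spectral_diag X)) *m U.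

Definition gen_trace_dist n (rho tau : 'M[C]_n) : R :=
  Num.max (trR (posPart (rho - tau))) (trR (posPart (tau - rho))).

Definition Hmin (dA dB : nat) (rho : 'M[C]_(dA * dB)) : \bar R :=
  ereal_sup
    [set ereal_sup
           [set l%:E | l in
              [set l : R | loewner_le rho
                 (((2 : R) `^ (- l))%:C%C *: ((1%:M : 'M[C]_dA) *t sigma))]]
    | sigma in [set sigma : 'M[C]_dB | normalized sigma]].

End QuantumDefs.

Arguments Hmin {R} dA dB rho.

(* Main.v *)
Require Import Defs.
From mathcomp Require Import all_boot all_order all_algebra ring lra.
From mathcomp Require Import sesquilinear spectral.
From mathcomp Require Import boolp classical_sets reals ereal exp.
From mathcomp.real_closed Require Import complex mxtens.
Import Order.TTheory GRing.Theory Num.Theory.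
Local Open Scope ring_scope.
Set Implicit Arguments. Unset Strict Implicit. Unset Printing Implicit Defensive.


Section Q.
Variable R : realType.
Local Notation C := R[i].

Lemma adjmxE m n (A : 'M[C]_(m,n)) i j : adjmx A i j = (A j i)^*.
Proof. by rewrite /adjmx !mxE. Qed.

Lemma adjmxD m n (A B : 'M[C]_(m,n)) : adjmx (A + B) = adjmx A + adjmx B.
Proof. by apply/matrixP=> i j; rewrite !(mxE, adjmxE) rmorphD. Qed.
Lemma adjmxN m n (A : 'M[C]_(m,n)) : adjmx (- A) = - adjmx A.
Proof. by apply/matrixP=> i j; rewrite !(mxE, adjmxE) rmorphN. Qed.
Lemma adjmxB m n (A B : 'M[C]_(m,n)) : adjmx (A - B) = adjmx A - adjmx B.
Proof. by rewrite adjmxD adjmxN. Qed.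
Lemma adjmxZ m n c (A : 'M[C]_(m,n)) : adjmx (c *: A) = c^* *: adjmx A.
Proof. by apply/matrixP=> i j; rewrite !(mxE, adjmxE) rmorphM. Qed.
Lemma adjmxK m n (A : 'M[C]_(m,n)) : adjmx (adjmx A) = A.
Proof. by apply/matrixP=> i j; rewrite !adjmxE conjCK. Qed.
Lemma adjmxM m n p (A : 'M[C]_(m,n)) (B : 'M[C]_(n,p)) :
  adjmx (A *m B) = adjmx B *m adjmx A.
Proof.
apply/matrixP=> i j; rewrite !(mxE, adjmxE) rmorph_sum; apply: eq_bigr => k _.
by rewrite !adjmxE rmorphM mulrC.
Qed.
Lemma adjmx_sum m n I (r : seq I) (P : pred I) (F : I -> 'M[C]_(m,n)) :
  adjmx (\sum_(i <- r | P i) F i) = \sum_(i <- r | P i) adjmx (F i).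
Proof.
apply/matrixP=> i j; rewrite adjmxE !summxE rmorph_sum; apply: eq_bigr => k _.
by rewrite adjmxE.
Qed.
Lemma adjmx1 n : adjmx (1%:M : 'M[C]_n) = 1%:M.
Proof. by apply/matrixP=> i j; rewrite adjmxE !mxE eq_sym; case: eqP; rewrite ?conjC1 ?conjC0. Qed.

Lemma conjR (c : R) : Num.conj (c%:C%C : C) = c%:C%C.
Proof. exact: conjc_real. Qed.

Lemma hermE n (M : 'M[C]_n) : (M \is hermsymmx) = (adjmx M == M).
Proof.
rewrite is_hermitianmxE expr0 scale1r /adjmx map_trmx.
by rewrite eq_sym.
Qed.

Lemma hermP n (M : 'M[C]_n) : M \is hermsymmx -> adjmx M = M.
Proof. by rewrite hermE => /eqP. Qed.

Definition bf n (u v : 'rV[C]_n) (M : 'M[C]_n) := (u *m M *m adjmx v) 0 0.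

Lemma bfE n (u v : 'rV[C]_n) M :
  bf u v M = \sum_i \sum_j u 0 i * M i j * (v 0 j)^*.
Proof.
rewrite /bf mxE exchange_big /=; apply: eq_bigr => j _.
rewrite mxE adjmxE mulr_suml; by apply: eq_bigr => i _; rewrite ?mxE.
Qed.

Lemma bfDl n (u u' v : 'rV[C]_n) M : bf (u + u') v M = bf u v M + bf u' v M.
Proof. by rewrite /bf !mulmxDl mxE. Qed.
Lemma bfDr n (u v v' : 'rV[C]_n) M : bf u (v + v') M = bf u v M + bf u v' M.
Proof. by rewrite /bf adjmxD mulmxDr mxE. Qed.
Lemma bfNl n (u v : 'rV[C]_n) M : bf (- u) v M = - bf u v M.
Proof. by rewrite /bf !mulNmx mxE. Qed.
Lemma bfNr n (u v : 'rV[C]_n) M : bf u (- v) M = - bf u v M.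
Proof. by rewrite /bf adjmxN mulmxN mxE. Qed.
Lemma bfDM n (u v : 'rV[C]_n) M N : bf u v (M + N) = bf u v M + bf u v N.
Proof. by rewrite /bf mulmxDr mulmxDl mxE. Qed.
Lemma bfNM n (u v : 'rV[C]_n) M : bf u v (- M) = - bf u v M.
Proof. by rewrite /bf mulmxN mulNmx mxE. Qed.
Lemma bfZM n (u v : 'rV[C]_n) c M : bf u v (c *: M) = c * bf u v M.
Proof. by rewrite /bf -scalemxAr -scalemxAl mxE. Qed.
Lemma bf_suml n I (r : seq I) (P : pred I) (F : I -> 'rV[C]_n) v M :
  bf (\sum_(i <- r | P i) F i) v M = \sum_(i <- r | P i) bf (F i) v M.
Proof. by rewrite /bf !mulmx_suml summxE. Qed.
Lemma bf_sumr n I (r : seq I) (P : pred I) (F : I -> 'rV[C]_n) u M :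
  bf u (\sum_(i <- r | P i) F i) M = \sum_(i <- r | P i) bf u (F i) M.
Proof. by rewrite /bf adjmx_sum mulmx_sumr summxE. Qed.

Lemma psdE n (M : 'M[C]_n) : psdmx M <-> M \is hermsymmx /\ forall v, 0 <= bf v v M.
Proof. by []. Qed.

Lemma psdD n (A B : 'M[C]_n) : psdmx A -> psdmx B -> psdmx (A + B).
Proof.
move=> [hA pA] [hB pB]; split.
  by rewrite hermE adjmxD (hermP hA) (hermP hB).
move=> v; rewrite -[X in 0 <= X]/(bf v v (A+B)) bfDM; exact: addr_ge0 (pA v) (pB v).
Qed.

Lemma psdZ n (c : R) (A : 'M[C]_n) : 0 <= c -> psdmx A -> psdmx (c%:C%C *: A).
Proof.
move=> c0 [hA pA]; split.
  by rewrite hermE adjmxZ (hermP hA) conjR.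
move=> v; rewrite -[X in 0 <= X]/(bf v v (c%:C%C *: A)) bfZM.
by apply: mulr_ge0; [rewrite ler0c | exact: pA].
Qed.

Lemma loewner_trans n (A B D : 'M[C]_n) :
  loewner_le A B -> loewner_le B D -> loewner_le A D.
Proof.
rewrite /loewner_le => h1 h2; have := psdD h2 h1.
by rewrite addrA subrK.
Qed.

Lemma psd_diag n (M : 'M[C]_n) i : psdmx M -> 0 <= M i i.
Proof.
move=> [_ pM]; have := pM (delta_mx 0 i); rewrite -[X in 0 <= X -> _]/(bf _ _ M) bfE.
rewrite (bigD1 i) //= [X in _ + X]big1 => [|j ji]; last first.
  by rewrite big1 // => k _; rewrite !mxE (negbTE ji) andbF mul0r mul0r.
rewrite addr0 (bigD1 i) //= [X in _ + X]big1 => [|j ji]; last first.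
  by rewrite !mxE (negbTE ji) andbF conjC0 mulr0.
by rewrite addr0 !mxE !eqxx /= mul1r conjC1 mulr1.
Qed.

Lemma psd_tr n (M : 'M[C]_n) : psdmx M -> 0 <= \tr M.
Proof. by move=> pM; rewrite /mxtrace sumr_ge0 // => i _; exact: psd_diag. Qed.

Lemma ge0_real (z : C) : 0 <= z -> z = (complex.Re z)%:C%C.
Proof. case: z => a b; rewrite lecE /= => /andP[/eqP hb _]; rewrite hb. by []. Qed.

Lemma psd_trR n (M : 'M[C]_n) : psdmx M -> \tr M = (trR M)%:C%C.
Proof. by move=> /psd_tr /ge0_real. Qed.

Lemma psd_trR_ge0 n (M : 'M[C]_n) : psdmx M -> 0 <= trR M.
Proof. by move=> pM; have := psd_tr pM; rewrite (psd_trR pM) ler0c. Qed.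

End Q.


Section T.
Variable R : realType.
Local Notation C := R[i].

Lemma big_tens m n (F : 'I_(m * n) -> C) :
  \sum_(k < m * n) F k = \sum_(i < m) \sum_(j < n) F (mxtens_index (i, j)).
Proof.
rewrite pair_big /= (reindex (@mxtens_index m n)) /=; last first.
  by exists (@mxtens_unindex m n) => i _; rewrite (mxtens_indexK, mxtens_unindexK).
by apply: eq_bigr => -[i j].
Qed.

Lemma sum_delta m (F : 'I_m -> C) a : \sum_x (x == a)%:R * F x = F a.
Proof.
rewrite (bigD1 a) //= big1 => [|x /negbTE ->]; last by rewrite mul0r.
by rewrite eqxx mul1r addr0.
Qed.

Lemma tensE m n p q (A : 'M[C]_(m, n)) (B : 'M[C]_(p, q)) i j :
  (A *t B) i j = A (@mxtens_unindex _ _ i).1 (@mxtens_unindex _ _ j).1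
                 * B (@mxtens_unindex _ _ i).2 (@mxtens_unindex _ _ j).2.
Proof. by rewrite mxE. Qed.

Lemma tensDr m n p q (A : 'M[C]_(m, n)) (X Y : 'M[C]_(p, q)) :
  A *t (X + Y) = A *t X + A *t Y.
Proof. by apply/matrixP=> i j; rewrite !(mxE, tensE) mulrDr. Qed.

Lemma tensZr m n p q (A : 'M[C]_(m, n)) c (X : 'M[C]_(p, q)) :
  A *t (c *: X) = c *: (A *t X).
Proof. by apply/matrixP=> i j; rewrite !(mxE, tensE) mulrCA. Qed.

Lemma tensNr m n p q (A : 'M[C]_(m, n)) (X : 'M[C]_(p, q)) :
  A *t (- X) = - (A *t X).
Proof. by rewrite -scaleN1r tensZr scaleN1r. Qed.

Lemma tens11 m n : (1%:M : 'M[C]_m) *t (1%:M : 'M[C]_n) = 1%:M.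
Proof.
apply/matrixP=> i j; case: (mxtens_indexP i) => a b; case: (mxtens_indexP j) => a' b'.
rewrite tensmxE !mxE (can_eq (@mxtens_indexK _ _)) xpair_eqE.
by case: (a == a'); case: (b == b'); rewrite /= ?mulr1 ?mulr0 ?mul0r.
Qed.

Lemma adjmx_tens m n p q (A : 'M[C]_(m, n)) (B : 'M[C]_(p, q)) :
  adjmx (A *t B) = adjmx A *t adjmx B.
Proof. by apply/matrixP=> i j; rewrite !(adjmxE, tensE) rmorphM. Qed.

Lemma tr_tens1 m n (Q : 'M[C]_n) :
  \tr ((1%:M : 'M[C]_m) *t Q) = m%:R * \tr Q.
Proof.
rewrite /mxtrace big_tens.
under eq_bigr do under eq_bigr do rewrite tensmxE mxE eqxx mul1r.
by rewrite sumr_const card_ord mulr_natl.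
Qed.

Definition rowA m n (w : 'rV[C]_(m * n)) a : 'rV[C]_n :=
  \row_b w 0 (mxtens_index (a, b)).

Definition emb m n a (y : 'rV[C]_n) : 'rV[C]_(m * n) :=
  \row_k (((@mxtens_unindex _ _ k).1 == a)%:R * y 0 (@mxtens_unindex _ _ k).2).

Definition ptrA m n (P : 'M[C]_(m * n)) : 'M[C]_n :=
  \matrix_(b, b') \sum_(a < m) P (mxtens_index (a, b)) (mxtens_index (a, b')).

Lemma bf_tens1 m n (w : 'rV[C]_(m * n)) (Q : 'M[C]_n) :
  bf w w ((1%:M : 'M[C]_m) *t Q) = \sum_a bf (rowA w a) (rowA w a) Q.
Proof.
rewrite bfE big_tens; apply: eq_bigr => a _.
rewrite bfE; apply: eq_bigr => b _.
rewrite big_tens.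
under eq_bigr do under eq_bigr do rewrite tensmxE !mxE.
rewrite (bigD1 a) //= [X in _ + X]big1 => [|a' /negbTE ne]; last first.
  by apply: big1 => b' _; rewrite eq_sym ne mulr0n mul0r mulr0 mul0r.
rewrite addr0; apply: eq_bigr => b' _.
by rewrite !mxE eqxx mul1r.
Qed.

Lemma bf_emb m n a (y : 'rV[C]_n) (P : 'M[C]_(m * n)) :
  bf (emb a y) (emb a y) P =
  \sum_b \sum_b' y 0 b * P (mxtens_index (a, b)) (mxtens_index (a, b')) * (y 0 b')^*.
Proof.
rewrite bfE big_tens.
under eq_bigr do under eq_bigr do rewrite big_tens.
under eq_bigr do under eq_bigr do under eq_bigr do under eq_bigr do
  rewrite !mxE !mxtens_indexK /= rmorphM /= -mulrA (mulrC (_%:R)^*) !mulrA.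
rewrite (bigD1 a) //= [X in _ + X]big1 => [|a' /negbTE ne]; last first.
  by apply: big1 => b _; apply: big1 => a'' _; apply: big1 => b' _;
     rewrite ne !mul0r.
rewrite addr0; apply: eq_bigr => b _.
rewrite (bigD1 a) //= [X in _ + X]big1 => [|a' /negbTE ne]; last first.
  by apply: big1 => b' _; rewrite ne rmorph0 !mulr0.
rewrite addr0; apply: eq_bigr => b' _.
by rewrite eqxx /= conjC1 !mulr1 mul1r.
Qed.

Lemma bf_ptrA m n (y : 'rV[C]_n) (P : 'M[C]_(m * n)) :
  bf y y (ptrA P) = \sum_a bf (emb a y) (emb a y) P.
Proof.
under [RHS]eq_bigr do rewrite bf_emb.
rewrite bfE [RHS]exchange_big /=; apply: eq_bigr => b _.
rewrite [RHS]exchange_big /=; apply: eq_bigr => b' _.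
by rewrite mxE mulr_sumr mulr_suml.
Qed.

Lemma emb_decomp m n (w : 'rV[C]_(m * n)) : w = \sum_(a < m) emb a (rowA w a).
Proof.
apply/rowP=> k; rewrite summxE.
case: (mxtens_indexP k) => a b.
under eq_bigr do rewrite !mxE mxtens_indexK /=.
by rewrite (bigD1 a) //= [X in _ + X]big1 => [|a' /negbTE ne]; rewrite ?eqxx ?mul1r ?addr0 // eq_sym ne mul0r.
Qed.

Lemma ptrA_herm m n (P : 'M[C]_(m * n)) : P \is hermsymmx -> ptrA P \is hermsymmx.
Proof.
move=> /hermP hP; rewrite hermE; apply/eqP/matrixP => b b'.
rewrite adjmxE !mxE rmorph_sum; apply: eq_bigr => a _.
by rewrite -[in RHS]hP adjmxE.
Qed.

Lemma ptrA_psd m n (P : 'M[C]_(m * n)) : psdmx P -> psdmx (ptrA P).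
Proof.
move=> [hP pP]; split; first exact: ptrA_herm.
move=> y; rewrite -[X in 0 <= X]/(bf y y (ptrA P)) bf_ptrA.
by apply: sumr_ge0 => a _; exact: pP.
Qed.

Lemma tr_ptrA m n (P : 'M[C]_(m * n)) : \tr (ptrA P) = \tr P.
Proof.
rewrite /mxtrace big_tens exchange_big /=; apply: eq_bigr => b _.
by rewrite mxE.
Qed.

Lemma tens1_psd m n (Q : 'M[C]_n) : psdmx Q -> psdmx ((1%:M : 'M[C]_m) *t Q).
Proof.
move=> [hQ pQ]; split.
  by rewrite hermE adjmx_tens adjmx1 (hermP hQ).
move=> w; rewrite -[X in 0 <= X]/(bf w w (1%:M *t Q)) bf_tens1.
by apply: sumr_ge0 => a _; exact: pQ.
Qed.

Lemma bf_CS m n (P : 'M[C]_n) (u : 'I_m -> 'rV[C]_n) : psdmx P ->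
  bf (\sum_a u a) (\sum_a u a) P <= m%:R * \sum_a bf (u a) (u a) P.
Proof.
move=> [_ pP].
set S := \sum_a bf (u a) (u a) P.
have eT : bf (\sum_a u a) (\sum_a u a) P = \sum_a \sum_a' bf (u a) (u a') P.
  rewrite bf_suml; apply: eq_bigr => a _; by rewrite bf_sumr.
have h : 0 <= \sum_a \sum_a' bf (u a - u a') (u a - u a') P.
  by apply: sumr_ge0 => a _; apply: sumr_ge0 => a' _; exact: pP.
have e2 : \sum_a \sum_a' bf (u a - u a') (u a - u a') P =
   (S *+ m + S *+ m) - (bf (\sum_a u a) (\sum_a u a) P + bf (\sum_a u a) (\sum_a u a) P).
  rewrite eT.
  under eq_bigr do under eq_bigr do rewrite bfDl bfDr bfDr !bfNl !bfNr opprK.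
under eq_bigr do rewrite !big_split /= !sumrN.
  rewrite !big_split /= !sumrN.
  rewrite [\sum_i \sum_j bf (u j) (u i) P]exchange_big /=.
  have -> : \sum_(a < m) \sum_(a' < m) bf (u a) (u a) P = S *+ m.
    by rewrite /S -sumrMnl; apply: eq_bigr => a _; rewrite sumr_const card_ord.
  have -> : \sum_(a < m) \sum_(a' < m) bf (u a') (u a') P = S *+ m.
    by rewrite sumr_const card_ord.
  set T := \sum_(i < m) _.
  rewrite opprD; ring.
have : 0 <= (S *+ m - bf (\sum_a u a) (\sum_a u a) P) *+ 2.
  by move: h; rewrite e2 mulr2n opprD addrACA.
rewrite pmulrn_lge0 // subr_ge0 => /le_trans; apply.
by rewrite mulr_natl.
Qed.


Lemma dA_bound m n (P : 'M[C]_(m * n)) : psdmx P ->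
  loewner_le P (m%:R *: ((1%:M : 'M[C]_m) *t ptrA P)).
Proof.
move=> pP; have [hP pP'] := pP; split.
  rewrite hermE adjmxB adjmxZ adjmx_tens adjmx1 (hermP (ptrA_herm hP)) (hermP hP).
  by rewrite rmorph_nat.
move=> w; rewrite -[X in 0 <= X]/(bf w w (_ - P)) bfDM bfNM bfZM subr_ge0.
have := bf_CS (fun a => emb a (rowA w a)) pP; rewrite -emb_decomp => h.
apply: (le_trans h); rewrite ler_wpM2l // bf_tens1.
apply: ler_sum => a _; rewrite bf_ptrA (bigD1 a) //= lerDl.
by apply: sumr_ge0 => a' _; exact: pP'.
Qed.

End T.


Section P.
Variable R : realType.
Local Notation C := R[i].

Lemma bf_diag n (x : 'rV[C]_n) (e : 'rV[C]_n) :
  bf x x (diag_mx e) = \sum_i x 0 i * e 0 i * (x 0 i)^*.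
Proof.
rewrite bfE; apply: eq_bigr => i _.
rewrite (bigD1 i) //= [X in _ + X]big1 => [|j /negbTE ne]; last first.
  by rewrite !mxE eq_sym ne mulr0n mulr0 mul0r.
by rewrite addr0 !mxE eqxx mulr1n.
Qed.

Lemma conj_diag_psd n (U : 'M[C]_n) (e : 'rV[R]_n) : (forall i, 0 <= e 0 i) ->
  psdmx (adjmx U *m diag_mx (map_mx (fun r => r%:C%C) e) *m U).
Proof.
move=> e0; split.
  rewrite hermE !adjmxM adjmxK mulmxA; apply/eqP; congr (_ *m _ *m _).
  apply/matrixP=> i j; rewrite adjmxE !mxE eq_sym.
  by case: eqP => [->|_]; rewrite ?mulr1n ?mulr0n ?rmorph0 //; exact: conjR.
move=> w; rewrite -[X in 0 <= X]/(bf w w _).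
have -> : bf w w (adjmx U *m diag_mx (map_mx (fun r => r%:C%C) e) *m U) =
          bf (w *m adjmx U) (w *m adjmx U) (diag_mx (map_mx (fun r => r%:C%C) e)).
  by rewrite /bf adjmxM adjmxK !mulmxA.
rewrite bf_diag; apply: sumr_ge0 => i _; rewrite mxE mulrAC.
by apply: mulr_ge0; [exact: mulcJ_ge0 | rewrite mxE ler0c].
Qed.

Section PP.
Variables (n : nat) (X : 'M[C]_n).
Hypothesis hX : X \is hermsymmx.

Local Notation U := (spectralmx X).
Local Notation d := (spectral_diag X).

Lemma invU : invmx U = adjmx U.
Proof. by rewrite invmx_unitary ?spectral_unitarymx // /adjmx map_trmx. Qed.

Lemma Xdecomp : X = adjmx U *m diag_mx d *m U.
Proof.
rewrite -invU; apply/orthomx_spectralP; exact: hermitian_normalmx.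
Qed.

Lemma d_real i : d 0 i = (complex.Re (d 0 i))%:C%C.
Proof.
have /mxOverP/(_ 0 i) := hermitian_spectral_diag_real hX.
by move=> /RRe_real ->.
Qed.

Definition dp : 'rV[R]_n := \row_i Num.max (complex.Re (d 0 i)) 0.

Lemma posPartE : posPart X = adjmx U *m diag_mx (map_mx (fun r => r%:C%C) dp) *m U.
Proof.
rewrite /posPart invU; congr (_ *m diag_mx _ *m _).
by apply/matrixP => i j; rewrite !mxE (ord1 i).
Qed.

Lemma posPart_psd : psdmx (posPart X).
Proof. rewrite posPartE; apply: conj_diag_psd => i; rewrite mxE; by rewrite le_max lexx orbT. Qed.

Lemma posPart_ge : loewner_le X (posPart X).
Proof.
rewrite /loewner_le.
have -> : posPart X - X = adjmx U *m diag_mx (map_mx (fun r => r%:C%C) dp) *m U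
    - adjmx U *m diag_mx d *m U by rewrite posPartE -Xdecomp.
rewrite -mulmxBl -mulmxBr -linearB /=.
have -> : map_mx (fun r => r%:C%C) dp - d =
          map_mx (fun r => r%:C%C) (\row_i (dp 0 i - complex.Re (d 0 i))).
  apply/matrixP=> i j; rewrite (ord1 i) !mxE (d_real j) /=.
  by rewrite rmorphB.
apply: conj_diag_psd => i; rewrite !mxE subr_ge0; by rewrite le_max lexx.
Qed.

Lemma trR_posPart : trR (posPart X) = \sum_i dp 0 i.
Proof.
rewrite /trR posPartE mxtrace_mulC mulmxA -invU mulmxV ?spectral_unit // mul1mx.
rewrite mxtrace_diag.
under eq_bigr do rewrite mxE.
by rewrite -rmorph_sum.
Qed.

Lemma posPart_le_tr : loewner_le (posPart X) ((trR (posPart X))%:C%C *: 1%:M).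
Proof.
rewrite /loewner_le; have := trR_posPart; set s := trR (posPart X) => es.
have -> : s%:C%C *: (1%:M : 'M[C]_n) =
   adjmx U *m diag_mx (map_mx (fun r => r%:C%C) (const_mx s)) *m U.
  rewrite -invU.
  have -> : diag_mx (map_mx (fun r => r%:C%C) (const_mx s) : 'rV[C]_n) =
            s%:C%C *: 1%:M.
    by apply/matrixP=> i j; rewrite !mxE mulr_natr.
  by rewrite -scalemxAr mulmx1 -scalemxAl mulVmx ?spectral_unit.
rewrite posPartE -mulmxBl -mulmxBr.
have -> : diag_mx (map_mx (fun r => r%:C%C) (const_mx s)) -
          diag_mx (map_mx (fun r => r%:C%C) dp) =
          diag_mx (map_mx (fun r => r%:C%C) (\row_i (s - dp 0 i)) : 'rV[C]_n).
  by apply/matrixP=> i j; rewrite !mxE; case: (i == j); rewrite ?mulr1n ?mulr0n ?subr0 ?rmorphB.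
apply: conj_diag_psd => i; rewrite !mxE subr_ge0 es.
apply: (@le_trans _ _ (dp 0 i)); first by rewrite mxE.
rewrite (bigD1 i) //= lerDl; apply: sumr_ge0 => j _; rewrite mxE; by rewrite le_max lexx orbT.
Qed.

End PP.
End P.


Section F.
Variable R : realType.
Local Notation C := R[i].

Lemma ReD (x y : C) : complex.Re (x + y) = complex.Re x + complex.Re y.
Proof. by case: x; case: y. Qed.
Lemma ReN (x : C) : complex.Re (- x) = - complex.Re x.
Proof. by case: x. Qed.
Lemma ReM (c : R) (x : C) : complex.Re (c%:C%C * x) = c * complex.Re x.
Proof. by case: x => a b /=; rewrite mul0r subr0. Qed.

Lemma trRB n (A B : 'M[C]_n) : trR (A - B) = trR A - trR B.
Proof. by rewrite /trR linearB /= ReD ReN. Qed.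
Lemma trRD n (A B : 'M[C]_n) : trR (A + B) = trR A + trR B.
Proof. by rewrite /trR mxtraceD ReD. Qed.
Lemma trRZ n c (A : 'M[C]_n) : trR (c%:C%C *: A) = c * trR A.
Proof. by rewrite /trR mxtraceZ ReM. Qed.

Lemma psd1 n : psdmx (1%:M : 'M[C]_n).
Proof.
have := @conj_diag_psd R n 1%:M (const_mx 1) (fun i => ltac:(by rewrite mxE)).
rewrite adjmx1 mul1mx mulmx1.
have -> // : diag_mx (map_mx (fun r => r%:C%C) (const_mx (1 : R))) = (1%:M : 'M[C]_n).
by apply/matrixP => i j; rewrite !mxE.
Qed.

Lemma normalized_tr n (s : 'M[C]_n) : normalized s -> trR s = 1.
Proof. by case=> _ h; rewrite /trR h. Qed.

Lemma zid (V : zmodType) (a t y p rho e : V) :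
  a + y + e - rho = (a - t) + (y - p) + (p - (rho - t)) + e.
Proof.
rewrite opprB -(addrA (a - t)) (addrA (y - p)) subrK.
rewrite -!addrA; congr (_ + _).
rewrite (addrC (- t)) -!addrA; congr (_ + _).
by rewrite addrCA (addrC t) subrK addrC.
Qed.

Lemma combine m n (rho tau P : 'M[C]_(m * n)) (sigma Q : 'M[C]_n) (c k : R) :
  (0 < n)%N -> 0 < c -> 0 <= k -> normalized sigma -> psdmx Q -> trR Q <= k ->
  loewner_le tau (c%:C%C *: (1%:M *t sigma)) -> loewner_le (rho - tau) P ->
  loewner_le P (1%:M *t Q) ->
  exists sigma', normalized sigma' /\ loewner_le rho ((c + k)%:C%C *: (1%:M *t sigma')).
Proof.
move=> n0 c0 k0 [ps trs] pQ trQ h1 h2 h3.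
set r := (k - trR Q) / n%:R.
have r0 : 0 <= r by rewrite /r divr_ge0 // subr_ge0.
set M := c%:C%C *: sigma + Q + r%:C%C *: 1%:M.
have ck0 : 0 < c + k by lra.
have pM : psdmx M by apply: psdD; [apply: psdD => //; exact: psdZ (ltW c0) ps | exact: psdZ r0 (psd1 n)].
have trM : \tr M = (c + k)%:C%C.
  rewrite /M !mxtraceD !mxtraceZ trs (psd_trR pQ) mxtrace1 mulr1.
  rewrite -(rmorph_nat (real_complex R)) -rmorphM -!rmorphD; congr (_%:C%C).
  rewrite /r; field; by rewrite pnatr_eq0 -lt0n.
exists (((c + k)^-1)%:C%C *: M); split.
  split; first by apply: psdZ => //; rewrite invr_ge0 ltW.
  by rewrite mxtraceZ trM -rmorphM mulVf // gt_eqF.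
rewrite tensZr scalerA -rmorphM divff ?gt_eqF // scale1r.
rewrite /loewner_le.
have -> : 1%:M *t M - rho =
   (c%:C%C *: (1%:M *t sigma) - tau) + (1%:M *t Q - P) + (P - (rho - tau))
   + r%:C%C *: 1%:M.
  rewrite /M !tensDr !tensZr.
  by rewrite tens11 (zid _ tau _ P).
apply: psdD; last exact: psdZ r0 (psd1 _).
by apply: psdD; [apply: psdD|].
Qed.

End F.


Section G.
Variable R : realType.
Local Notation C := R[i].

Definition feas m n (rho : 'M[C]_(m * n)) (sigma : 'M[C]_n) (l : R) :=
  loewner_le rho (((2 : R) `^ (- l))%:C%C *: ((1%:M : 'M[C]_m) *t sigma)).

Lemma Hmin_ge m n (rho : 'M[C]_(m * n)) sigma l :
  normalized sigma -> feas rho sigma l -> (l%:E <= Hmin m n rho)%E.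
Proof.
move=> ns fl; apply: le_trans (ereal_sup_ubound _); last by exists sigma.
by apply: ereal_sup_ubound; exists l.
Qed.

Lemma Hmin_le m n (rho : 'M[C]_(m * n)) x :
  (forall sigma l, normalized sigma -> feas rho sigma l -> l <= x) ->
  (Hmin m n rho <= x%:E)%E.
Proof.
move=> h; apply: ge_ereal_sup => _ [sigma ns <-].
apply: ge_ereal_sup => _ [l fl <-]; rewrite lee_fin; exact: h fl.
Qed.

Lemma ln2_gt0 : 0 < ln (2 : R).
Proof. by apply: ln_gt0; rewrite ltr1n. Qed.

Lemma powR2_ln (y : R) : 0 < y -> (2 : R) `^ (ln y / ln 2) = y.
Proof.
move=> y0; rewrite /powR pnatr_eq0 /= divfK ?gt_eqF ?ln2_gt0 //.
by apply: lnK; rewrite posrE.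
Qed.

Lemma feas_of m n (rho : 'M[C]_(m * n)) sigma y : 0 < y ->
  loewner_le rho (y%:C%C *: ((1%:M : 'M[C]_m) *t sigma)) ->
  feas rho sigma (- (ln y / ln 2)).
Proof. by move=> y0 h; rewrite /feas opprK powR2_ln. Qed.

Lemma Re_nat n : complex.Re (n%:R : C) = n%:R.
Proof. by rewrite -(rmorph_nat (real_complex R)). Qed.
Lemma trR1 n : trR (1%:M : 'M[C]_n) = n%:R.
Proof. by rewrite /trR mxtrace1 -(rmorph_nat (real_complex R)). Qed.

Lemma feas_ub m n (rho : 'M[C]_(m * n)) sigma l :
  normalized sigma -> feas rho sigma l -> trR rho <= (2 : R) `^ (- l) * m%:R.
Proof.
move=> [_ ts] fl; have := psd_trR_ge0 fl.
rewrite trRB trRZ subr_ge0 /trR tr_tens1 ts mulr1.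
by rewrite -(rmorph_nat (real_complex R)).
Qed.

Lemma l_ub m n (rho : 'M[C]_(m * n)) sigma l : (0 < m)%N -> 0 < trR rho ->
  normalized sigma -> feas rho sigma l -> l <= - (ln (trR rho / m%:R) / ln 2).
Proof.
move=> m0 t0 ns fl; have := feas_ub ns fl.
rewrite -ler_pdivrMr ?ltr0n // => h.
have : ln (trR rho / m%:R) <= ln ((2 : R) `^ (- l)).
  by rewrite ler_ln // posrE ?divr_gt0 ?ltr0n ?powR_gt0.
rewrite ln_powR => h2.
rewrite -mulNr ler_pdivlMr ?ln2_gt0 //; nra.
Qed.

Lemma dims_pos m n (rho : 'M[C]_(m * n)) : 0 < trR rho -> (0 < m)%N /\ (0 < n)%N.
Proof.
move=> t0; case: (ltnP 0 (m * n)) => [|h]; first by rewrite muln_gt0 => /andP.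
move: t0; rewrite /trR /mxtrace big1 ?lt_irreflexive // => i _.
by have := ltn_ord i; rewrite ltnNge (leq_trans h).
Qed.

End G.


Section I.
Variable R : realType.
Local Notation C := R[i].

Lemma Hmin_fin m n (rho : 'M[C]_(m * n)) : subnormalized rho ->
  exists h, Hmin m n rho = h%:E /\
    (forall sigma l, normalized sigma -> feas rho sigma l -> l <= h) /\
    (forall x, (forall sigma l, normalized sigma -> feas rho sigma l -> l <= x) -> h <= x).
Proof.
move=> [pr [t0 t1]]; have [m0 n0] := dims_pos t0.
have [σ [l [nσ fl]]] : exists σ l, normalized σ /\ feas rho σ l.
  have hr : rho \is hermsymmx := pr.1.
  set σ0 := ((n%:R : R)^-1)%:C%C *: (1%:M : 'M[C]_n).
  have nσ0 : normalized σ0.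
    split; first by apply: psdZ; [rewrite invr_ge0 ler0n | exact: psd1 R n].
    rewrite mxtraceZ mxtrace1 -(rmorph_nat (real_complex R)) -rmorphM mulVf //.
    by rewrite pnatr_eq0 -lt0n.
  have pP := posPart_psd rho.
  have tP0 := psd_trR_ge0 pP.
  have [] := @combine R m n rho 0 (posPart rho) σ0 ((trR (posPart rho))%:C%C *: 1%:M) 1
     (trR (posPart rho) * n%:R) n0 ltr01.
  - by rewrite mulr_ge0 ?ler0n.
  - by [].
  - exact: psdZ tP0 (psd1 R n).
  - by rewrite trRZ trR1.
  - by rewrite /loewner_le subr0; apply: psdZ ler01 (tens1_psd _ (nσ0.1)).
  - by rewrite subr0; exact: posPart_ge.
  - by rewrite tensZr tens11; exact: posPart_le_tr.
  - move=> σ' [nσ' h]; exists σ', (- (ln (1 + trR (posPart rho) * n%:R) / ln 2)).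
    split; first exact: nσ'. apply: (@feas_of R m n rho σ' (1 + trR (posPart rho) * n%:R) _ h).
    by rewrite ltr_pwDl // mulr_ge0 ?ler0n.
have ub := fun s l ns fl => @l_ub R m n rho s l m0 t0 ns fl.
have ge := Hmin_ge nσ fl; have le := Hmin_le ub.
move: ge le; case E: (Hmin m n rho) => [h| |] // _ _.
exists h; split => //; split.
  by move=> s' l' ns fl'; have := Hmin_ge ns fl'; rewrite E lee_fin.
by move=> x hx; have := Hmin_le hx; rewrite E lee_fin.
Qed.

End I.


Section J.
Variable R : realType.
Local Notation C := R[i].

Lemma real_step (c k mn M d : R) : 0 < c -> 0 <= k -> 0 < mn -> mn <= c * M ->
  k <= d -> 0 <= d ->
  (ln (c + k) - ln c) / ln 2 <= M * d / (ln 2 * mn).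
Proof.
move=> c0 k0 mn0 hc hk d0.
have eln : ln (c + k) = ln c + ln (1 + k / c).
  have q1 : 0 <= k / c by rewrite divr_ge0 // ltW.
  have p1 : 0 < 1 + k / c by lra.
  rewrite -lnM ?posrE //.
  by rewrite mulrDr mulr1 mulrCA divff ?gt_eqF // mulr1.
rewrite eln addrAC subrr add0r.
have h1 : ln (1 + k / c) <= k / c.
  apply: le_ln1Dx; apply: (@lt_le_trans _ _ 0); first by rewrite ltrN10.
  by rewrite divr_ge0 // ltW.
have h2 : k / c <= M * d / mn.
  rewrite ler_pdivrMr // mulrAC ler_pdivlMr //.
  have : k * mn <= d * (c * M) by apply: ler_pM => //; exact: ltW.
  lra.
rewrite invfM mulrA [X in _ <= X]mulrAC ler_pM2r ?invr_gt0 ?ln2_gt0 //.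
exact: le_trans h1 h2.
Qed.

Lemma transfer m n (rho tau : 'M[C]_(m * n)) sigma l :
  subnormalized rho -> subnormalized tau -> normalized sigma -> feas tau sigma l ->
  exists sigma' l', normalized sigma' /\ feas rho sigma' l' /\
   l - (m * minn m n)%:R * gen_trace_dist rho tau
         / (ln 2 * Num.min (trR rho) (trR tau)) <= l'.
Proof.
move=> [pr [tr0 _]] [pt [tt0 _]] ns fl.
have [m0 n0] := dims_pos tr0.
set c := (2:R) `^ (- l).
have c0 : 0 < c by apply: powR_gt0.
have hτ : trR tau <= c * m%:R := feas_ub ns fl.
have hX : rho - tau \is hermsymmx by rewrite hermE adjmxB (hermP pr.1) (hermP pt.1).
set P := posPart (rho - tau).
have pP : psdmx P := posPart_psd _.
set δ := gen_trace_dist rho tau.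
have hPδ : trR P <= δ by rewrite /δ /gen_trace_dist le_max lexx.
have tP0 := psd_trR_ge0 pP.
set k := (minn m n)%:R * δ.
have [Q [pQ [tQ hQ]]] : exists Q, psdmx Q /\ trR Q <= k /\ loewner_le P (1%:M *t Q).
  case: (leqP m n) => hmn.
  - exists ((m%:R : R)%:C%C *: ptrA P); split; first exact: psdZ (ler0n _ _) (ptrA_psd pP).
    split; first by rewrite trRZ /trR tr_ptrA /k (minn_idPl hmn) ler_wpM2l ?ler0n.
    by rewrite tensZr (rmorph_nat (real_complex R)); exact: dA_bound.
  - exists ((trR P)%:C%C *: 1%:M); split; first exact: psdZ tP0 (psd1 R n).
    split; first by rewrite trRZ trR1 /k (minn_idPr (ltnW hmn)) mulrC ler_wpM2l ?ler0n.
    by rewrite tensZr tens11; exact: posPart_le_tr.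
have k0 : 0 <= k by rewrite /k mulr_ge0 ?ler0n // (le_trans tP0).
have [σ' [nσ' h]] := combine n0 c0 k0 ns pQ tQ fl (posPart_ge hX) hQ.
have ck0 : 0 < c + k by lra.
exists σ', (- (ln (c + k) / ln 2)); split; first exact: nσ'.
split; first exact: (@feas_of R m n rho σ' (c + k) ck0 h).
have lc : l = - (ln c / ln 2).
  by rewrite /c ln_powR mulfK ?gt_eqF ?ln2_gt0 // opprK.
set mn := Num.min (trR rho) (trR tau).
have mn0 : 0 < mn by rewrite /mn lt_min tr0 tt0.
have hmn' : mn <= c * m%:R by rewrite /mn ge_min hτ orbT.
have := real_step c0 k0 mn0 hmn' (lexx k) k0.
rewrite /k natrM -/δ !mulrA {1}lc mulrBl; lra.
Qed.

End J.

Theorem lemma11 (R : realType) (dA dB : nat) (rho tau : 'M[R[i]]_(dA * dB)) :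
  subnormalized rho -> subnormalized tau ->
  (`| Hmin dA dB rho - Hmin dA dB tau |
     <= ((dA * minn dA dB)%:R * gen_trace_dist rho tau
         / (ln 2 * Num.min (trR rho) (trR tau)))%:E)%E.
Proof.
move=> sr st.
have [hr [Er [Ar Br]]] := Hmin_fin sr.
have [ht [Et [At Bt]]] := Hmin_fin st.
rewrite Er Et -EFinB abse_EFin lee_fin ler_distl.
have sym : gen_trace_dist tau rho = gen_trace_dist rho tau by rewrite /gen_trace_dist maxC.
have symm : Num.min (trR tau) (trR rho) = Num.min (trR rho) (trR tau) by rewrite minC.
set K := ((dA * minn dA dB)%:R * gen_trace_dist rho tau / (ln 2 * Num.min (trR rho) (trR tau))).
have h1 : ht <= hr + K.
  apply: Bt => s l ns fl.
  have [s' [l' [ns' [fl' hl]]]] := transfer sr st ns fl.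
  have := Ar _ _ ns' fl'; rewrite -/K in hl; lra.
have h2 : hr <= ht + K.
  apply: Br => s l ns fl.
  have [s' [l' [ns' [fl' hl]]]] := transfer st sr ns fl.
  rewrite sym symm -/K in hl.
  have := At _ _ ns' fl'; lra.
apply/andP; split; lra.
Qed.
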